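(* Let $p$ be a prime, $q=p^r$, $\mathscr{C}\subseteq\mathbb{F}_q^n$ a linear code over $\mathbb{F}_q$ of dimension $k$ ($1\le k<n$), $m\ge2$, $\mathscr{D}=\{(\lambda,\ldots,\lambda):\lambda\in\mathbb{F}_{q^k}\}\subset\mathbb{F}_{q^k}^m$, $\kappa:\mathbb{F}_{q^k}\to\mathcal{L}(\mathscr{C},\mathbb{F}_p)$ an $\mathbb{F}_p$-linear isomorphism, $f_\lambda=\kappa(\lambda)$, and $Q=\operatorname{span}\{\Phi_\Lambda:\Lambda\in\mathscr{D}\}$. Then $$Q=\operatorname{span}\Big\{\sum_{\substack{(\mathbf{c}_1,\ldots,\mathbf{c}_m)\in\mathscr{C}^m\\ \mathbf{c}_1+\cdots+\mathbf{c}_m=\mathbf{c}}}|\mathbf{c}_1\ldots\mathbf{c}_m\rangle:\mathbf{c}\in\mathscr{C}\Big\}.$$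
   Context: $\zeta=e^{2\pi i/p}$; $\mathcal{L}(\mathscr{C},\mathbb{F}_p)$ is the space of $\mathbb{F}_p$-linear maps $\mathscr{C}\to\mathbb{F}_p$, with $\mathbb{F}_{q^k}$ viewed as an $\mathbb{F}_p$-space. $\phi_\lambda=q^{-k/2}\sum_{\mathbf{c}\in\mathscr{C}}\zeta^{f_\lambda(\mathbf{c})}|\mathbf{c}\rangle\in(\mathbb{C}^q)^{\otimes n}$, $\Phi_\Lambda=\phi_{\lambda_1}\otimes\cdots\otimes\phi_{\lambda_m}$; $(\mathbb{C}^q)^{\otimes nm}$ has orthonormal basis $|\mathbf{c}_1\ldots\mathbf{c}_m\rangle=|\mathbf{c}_1\rangle\otimes\cdots\otimes|\mathbf{c}_m\rangle$. *)

(* Defs.v *)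
From HB Require Import structures.
From mathcomp Require Import all_boot all_order all_algebra all_field.
From mathcomp Require Import complex.
From mathcomp Require Import reals trigo.
Set Implicit Arguments. Unset Strict Implicit. Unset Printing Implicit Defensive.
Import GRing.Theory Num.Theory.
Local Open Scope ring_scope.

Definition zeta (R : realType) (p : nat) : R[i] :=
  Complex (cos (2 * pi / p%:R)) (sin (2 * pi / p%:R)).

(* f : F_q^n -> F_p is F_p-linear on the code C.  The F_p-vector-space structure
   on F_q^n (char F_q = p) is  a . x = x *+ a  (a viewed as a natural < p). *)
Definition Fp_linear_on (p : nat) (F : finFieldType) (n : nat)
    (C : {vspace 'rV[F]_n}) (f : 'rV[F]_n -> 'F_p) : Prop :=
  forall (a : 'F_p) (x y : 'rV[F]_n), x \in C -> y \in C ->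
    f (x *+ val a + y) = a * f x + f y.

(* kappa : K -> L(C, F_p) is an F_p-linear isomorphism.  Elements of L(C,F_p)
   are represented by functions on F_q^n, identified when they agree on C. *)
Definition Fp_iso_to_dual (p : nat) (F : finFieldType) (n : nat)
    (C : {vspace 'rV[F]_n}) (K : finFieldType) (kappa : K -> 'rV[F]_n -> 'F_p)
    : Prop :=
  [/\ (forall lam, Fp_linear_on C (kappa lam)),
      (forall (a : 'F_p) (lam mu : K) (c : 'rV[F]_n), c \in C ->
          kappa (lam *+ val a + mu) c = a * kappa lam c + kappa mu c),
      (forall lam mu : K, {in C, kappa lam =1 kappa mu} -> lam = mu)
    & (forall f : 'rV[F]_n -> 'F_p, Fp_linear_on C f ->
          exists lam : K, {in C, kappa lam =1 f})].

(* Vectors of (C^q)^{(x) n} are functions F_q^n -> C (|c> = indicator of c);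
   vectors of (C^q)^{(x) nm} are functions (F_q^n)^m -> C, where a point
   (c_1,...,c_m) is represented by cs : {ffun 'I_m -> 'rV[F]_n}. *)
Definition ket_space (R : realType) (F : finFieldType) (n m : nat) :=
  {ffun {ffun 'I_m -> 'rV[F]_n} -> (R[i])^o}.

Definition phi (R : realType) (p : nat) (F : finFieldType) (n : nat)
    (C : {vspace 'rV[F]_n}) (f : 'rV[F]_n -> 'F_p) : 'rV[F]_n -> R[i] :=
  fun x => if x \in C then
     Complex ((Num.sqrt ((#|F| ^ \dim C)%:R : R))^-1) 0 * zeta R p ^+ val (f x)
   else 0.

Definition Phi (R : realType) (p : nat) (F : finFieldType) (n m : nat)
    (C : {vspace 'rV[F]_n}) (K : finFieldType) (kappa : K -> 'rV[F]_n -> 'F_p)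
    (Lam : {ffun 'I_m -> K}) : ket_space R F n m :=
  [ffun cs : {ffun 'I_m -> 'rV[F]_n} => \prod_(i < m) phi R C (kappa (Lam i)) (cs i)].

Definition diagD (K : finFieldType) (m : nat) : {set {ffun 'I_m -> K}} :=
  [set [ffun _ => lam] | lam : K].

Definition sumket (R : realType) (F : finFieldType) (n m : nat)
    (C : {vspace 'rV[F]_n}) (c : 'rV[F]_n) : ket_space R F n m :=
  [ffun cs : {ffun 'I_m -> 'rV[F]_n} => if [forall i, cs i \in C] && (\sum_(i < m) cs i == c)
              then 1 else 0].

Definition code_elems (F : finFieldType) (n : nat) (C : {vspace 'rV[F]_n})
  : seq 'rV[F]_n := enum [set c : 'rV[F]_n | c \in C].

(* Main.v *)
Require Import Defs.

From HB Require Import structures.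
From mathcomp Require Import all_boot all_order all_algebra all_field.
From mathcomp Require Import complex.
From mathcomp Require Import reals trigo.
From mathcomp Require Import ring lra.
Import GRing.Theory Num.Theory.
Local Open Scope ring_scope.
Set Warnings "-notation-overridden -ambiguous-paths".

Section Zeta.
Variables (R : realType) (p : nat).
Hypothesis pp : prime p.
Let th : R := 2 * pi / p%:R.

Lemma zeta_exp j : zeta R p ^+ j = Complex (cos (j%:R * th)) (sin (j%:R * th)).
Proof.
elim: j => [|j IH]; first by rewrite expr0 !mul0r cos0 sin0.
rewrite exprSr IH /zeta -/th /= mulrSr mulrDl mul1r cosD sinD.
congr Complex; ring.
Qed.

Lemma p_gt0R : (0 : R) < p%:R.
Proof. by rewrite ltr0n prime_gt0. Qed.

Lemma zeta_p : zeta R p ^+ p = 1.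
Proof.
rewrite zeta_exp.
have -> : p%:R * th = pi *+ 2.
  by rewrite /th mulr2n; field; rewrite lt0r_neq0 // p_gt0R.
by rewrite cos2pi sin2pi.
Qed.

Lemma zeta_neq1 j : (0 < j < p)%N -> zeta R p ^+ j != 1.
Proof.
move=> /andP[j0 jp]; rewrite zeta_exp; apply/eqP => [[Hc _]].
pose y : R := pi * j%:R / p%:R.
have Hy : j%:R * th = y *+ 2 by rewrite /y /th; rewrite -mulr_natl; field; rewrite lt0r_neq0 // p_gt0R.
have y0 : 0 < y < pi.
  apply/andP; split.
    by rewrite /y divr_gt0 ?p_gt0R // mulr_gt0 ?pi_gt0 // ltr0n.
  rewrite /y ltr_pdivrMr ?p_gt0R // ltr_pM2l ?pi_gt0 // ltr_nat.
  done.
have := sin_gt0_pi y0.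
move: Hc; rewrite Hy cos_mulr2n => Hc.
have : sin y ^+ 2 = 0 by rewrite sin2cos2; lra.
by move/eqP; rewrite expf_eq0 /= => /eqP ->; rewrite Order.POrderTheory.ltxx.
Qed.
Definition ee (a : 'F_p) : R[i] := zeta R p ^+ val a.

Lemma ee0 : ee 0 = 1.
Proof. by rewrite /ee /= expr0. Qed.

Lemma eeD a b : ee (a + b) = ee a * ee b.
Proof.
rewrite /ee -exprD /=.
set N := (Zp_trunc (pdiv p)).+2.
have HN : N = p by exact: Fp_cast.
have E x : zeta R p ^+ (x %% N) = zeta R p ^+ x by rewrite HN (expr_mod _ zeta_p).
exact: E.
Qed.

Lemma ee_eq1 a : ee a = 1 -> a = 0.
Proof.
move=> H; apply/val_inj => /=.
case: (posnP (val a)) => // a0.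
have ap : (val a < p)%N by apply: leq_trans (ltn_ord a) _; rewrite (Fp_cast pp).
by move: (@zeta_neq1 (val a)); rewrite a0 ap /= -/(ee a) H eqxx => /(_ isT).
Qed.

Lemma eeN a : ee (- a) * ee a = 1.
Proof. by rewrite -eeD addNr ee0. Qed.
End Zeta.

Section Main.
Variables (R : realType) (p : nat) (F : finFieldType) (n m : nat)
  (C : {vspace 'rV[F]_n}) (K : finFieldType) (kappa : K -> 'rV[F]_n -> 'F_p).
Hypotheses (pp : prime p) (Hiso : Fp_iso_to_dual C kappa)
  (HK : #|K| = (#|F| ^ \dim C)%N).

Local Notation e := (ee R p).

Lemma val1 : val (1 : 'F_p) = 1%N.
Proof. by []. Qed.

Lemma fD l x y : x \in C -> y \in C -> kappa l (x + y) = kappa l x + kappa l y.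
Proof. case: Hiso => H1 _ _ _ hx hy; have := H1 l 1 x y hx hy. by rewrite val1 mul1r. Qed.

Arguments fD l {x y}.

Lemma f0 l : kappa l 0 = 0.
Proof.
have := fD l (mem0v C) (mem0v C); rewrite addr0 => H.
by apply: (addrI (kappa l 0)); rewrite addr0 -H.
Qed.

Lemma fN l x : x \in C -> kappa l (- x) = - kappa l x.
Proof.
move=> hx; have hx' : - x \in C by rewrite memvN.
have := fD l hx hx'; rewrite subrr f0 => H.
by apply/eqP; rewrite -addr_eq0 addrC -H.
Qed.

Lemma fsum l (cs : {ffun 'I_m -> 'rV[F]_n}) : (forall i, cs i \in C) ->
  kappa l (\sum_i cs i) = \sum_i kappa l (cs i).
Proof.
move=> H.
suff : (\sum_i cs i) \in C /\ kappa l (\sum_i cs i) = \sum_i kappa l (cs i) by case.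
apply: (big_rec2 (fun y1 y2 => y1 \in C /\ kappa l y1 = y2)).
  by rewrite mem0v f0.
move=> i y1 y2 _ [h1 <-]; split; first by rewrite memvD.
by rewrite fD.
Qed.

Lemma kD l mu c : c \in C -> kappa (l + mu) c = kappa l c + kappa mu c.
Proof. case: Hiso => _ H2 _ _ hc; have := H2 1 l mu c hc. by rewrite val1 mul1r. Qed.

Arguments kD l mu {c}.

Lemma k0 c : c \in C -> kappa 0 c = 0.
Proof.
move=> hc; have := kD 0 0 hc; rewrite addr0 => H.
by apply: (addrI (kappa 0 c)); rewrite addr0 -H.
Qed.

Lemma kinj l : (forall c, c \in C -> kappa l c = 0) -> l = 0.
Proof.
case: Hiso => _ _ H3 _ H; apply: H3 => c hc /=; by rewrite H // k0.
Qed.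

Let s : R[i] := Complex ((Num.sqrt ((#|F| ^ \dim C)%:R : R))^-1) 0.
Definition LL l : {ffun 'I_m -> K} := [ffun => l].

Lemma PhiE l cs : @Phi R p F n m C K kappa (LL l) cs =
  if [forall i, cs i \in C] then s ^+ m * e (kappa l (\sum_i cs i)) else 0.
Proof.
rewrite ffunE; case: (boolP [forall i, cs i \in C]) => H.
  have H' : forall i, cs i \in C by move/forallP: H.
  rewrite fsum // (big_morph e (@eeD R p pp) (ee0 R p)) .
  have -> : s ^+ m = \prod_(i < m) s by rewrite prodr_const card_ord.
  rewrite -big_split /=.
  apply: eq_bigr => i _; by rewrite ffunE /phi H'.
move/forallPn: H => [i Hi].
by rewrite (bigD1 i) //= ffunE /phi (negbTE Hi) mul0r.
Qed.

Lemma ffZ (a : R[i]) (f : ket_space R F n m) x : (a *: f) x = a * f x.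
Proof. rewrite /= ffunE //. Qed.

Lemma PhiA l : @Phi R p F n m C K kappa (LL l) =
   s ^+ m *: \sum_(c | c \in C) e (kappa l c) *: @sumket R F n m C c.
Proof.
apply/ffunP => cs; rewrite PhiE ffZ sum_ffunE.
rewrite (eq_bigr (fun c => e (kappa l c) * (if [forall i, cs i \in C] && (\sum_i cs i == c) then 1 else 0))); last first.
  by move=> c _; rewrite ffZ ffunE.
case: (boolP [forall i, cs i \in C]) => H /=; last first.
  by rewrite big1 ?mulr0 // => c _; rewrite mulr0.
have H' : forall i, cs i \in C by move/forallP: H.
have HS : \sum_i cs i \in C by apply: memv_suml => i _.
rewrite (bigD1 (\sum_i cs i)) //= eqxx mulr1 [X in _ + X]big1 ?addr0 // => c /andP[_ /negbTE].
by rewrite eq_sym => ->; rewrite mulr0.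
Qed.

Lemma shift0 (S x : R[i]) : S = x * S -> x != 1 -> S = 0.
Proof.
move=> HS Hx; have : (1 - x) * S = 0 by rewrite mulrBl mul1r -HS subrr.
move/eqP; rewrite mulf_eq0 subr_eq0 eq_sym (negbTE Hx) /= => /eqP //.
Qed.

Lemma ee_neq1 a : a != 0 -> e a != 1.
Proof. by move=> Ha; apply/eqP => /(@ee_eq1 R p pp) H; rewrite H eqxx in Ha. Qed.

Lemma sumK_gen d : d \in C -> \sum_(l : K) e (kappa l d) =
  if [forall l, kappa l d == 0] then #|K|%:R else 0.
Proof.
move=> hd; case: (boolP [forall l, kappa l d == 0]) => H.
  rewrite (eq_bigr (fun _ => 1)); first by rewrite sumr_const.
  by move=> l _; rewrite (eqP (forallP H l)) ee0.
move/forallPn: H => [l0 Hl0].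
apply: (@shift0 _ (e (kappa l0 d))); last exact: ee_neq1.
rewrite {1}(reindex_inj (addIr l0)) mulr_sumr; apply: eq_bigr => l _.
by rewrite kD // (@eeD R p pp) mulrC.
Qed.

Lemma memvDr' c c0 : c0 \in C -> (c + c0 \in C) = (c \in C).
Proof.
move=> h0; apply/idP/idP => h; last exact: memvD.
by have := memvB h h0; rewrite addrK.
Qed.

Lemma sumC_gen l : \sum_(c | c \in C) e (kappa l c) =
  if [forall c, (c \in C) ==> (kappa l c == 0)] then #|C|%:R else 0.
Proof.
case: (boolP [forall c, (c \in C) ==> (kappa l c == 0)]) => H.
  rewrite (eq_bigr (fun _ => 1)); first by rewrite sumr_const.
  by move=> c hc; rewrite (eqP (implyP (forallP H c) hc)) ee0.
move/forallPn: H => [c0]; rewrite negb_imply => /andP[h0 Hc0].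
apply: (@shift0 _ (e (kappa l c0))); last exact: ee_neq1.
rewrite big_mkcond {1}(reindex_inj (addIr c0)) /= mulr_sumr.
apply: eq_bigr => c _; rewrite memvDr' //; case: ifP => hc; last by rewrite mulr0.
by rewrite fD // (@eeD R p pp) mulrC.
Qed.

Lemma zeroP l : [forall c, (c \in C) ==> (kappa l c == 0)] = (l == 0).
Proof.
apply/idP/idP.
  by move=> H; apply/eqP/kinj => c hc; apply/eqP; exact: (implyP (forallP H c) hc).
by move/eqP->; apply/forallP => c; apply/implyP => hc; rewrite k0.
Qed.

Lemma Dtriv d : d \in C -> [forall l, kappa l d == 0] = (d == 0).
Proof.
move=> hd.
pose A := [pred c | (c \in C) && [forall l, kappa l c == 0]].
have T1 : \sum_(l : K) \sum_(c | c \in C) e (kappa l c) = #|C|%:R.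
  rewrite (eq_bigr (fun l => if l == 0 then #|C|%:R else 0)); last first.
    by move=> l _; rewrite sumC_gen zeroP.
  by rewrite -big_mkcond big_pred1_eq.
have T2 : \sum_(l : K) \sum_(c | c \in C) e (kappa l c) = #|K|%:R *+ #|A|.
  rewrite exchange_big /=.
  rewrite (eq_bigr (fun c => if [forall l, kappa l c == 0] then #|K|%:R else 0)); last first.
    by move=> c hc; rewrite sumK_gen.
  rewrite -big_mkcondr (eq_bigl (fun c => c \in A)); first exact: sumr_const.
  by move=> c; rewrite /A inE.
have HC : #|C| = #|K| by rewrite HK card_vspace.
have HA : #|A| = 1%N.
  move: T2; rewrite T1 HC -mulrnA => /eqP; rewrite eqr_nat => /eqP H.
  apply/eqP; rewrite -(eqn_pmul2l (m := #|K|)); first by rewrite muln1 -H.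
  by rewrite -HC; apply/card_gt0P; exists 0; exact: mem0v.
apply/idP/idP; last first.
  by move/eqP->; apply/forallP => l; rewrite f0.
move=> H; apply/negPn/negP => dn0.
have : (#|[set (0%R : 'rV[F]_n); d]| <= #|A|)%N.
  apply: subset_leq_card; apply/subsetP => x; rewrite !inE => /orP[]/eqP->.
    by rewrite mem0v; apply/forallP => l; rewrite f0.
  by rewrite hd H.
by rewrite cards2 eq_sym dn0 HA.
Qed.

Lemma PhiB c : c \in C -> \sum_(l : K) e (- kappa l c) *: @Phi R p F n m C K kappa (LL l)
   = (#|K|%:R * s ^+ m) *: @sumket R F n m C c.
Proof.
move=> hc; apply/ffunP => cs; rewrite ffZ sum_ffunE ffunE.
rewrite (eq_bigr (fun l => e (- kappa l c) * @Phi R p F n m C K kappa (LL l) cs)); last first.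
  by move=> l _; rewrite ffZ.
under eq_bigr => l _ do rewrite PhiE.
case: (boolP [forall i, cs i \in C]) => H /=; last first.
  by rewrite big1 ?mulr0 // => l _; rewrite mulr0.
have H' : forall i, cs i \in C by move/forallP: H.
have HS : \sum_i cs i \in C by apply: memv_suml => i _.
rewrite (eq_bigr (fun l => s ^+ m * e (kappa l (\sum_i cs i - c)))); last first.
  move=> l _; rewrite fD ?memvN // fN // (@eeD R p pp).
  by rewrite mulrCA [X in _ * X]mulrC.
rewrite -mulr_sumr sumK_gen ?memvB // Dtriv ?memvB // subr_eq0.
by case: (_ == c); rewrite ?mulr1 ?mulr0 // mulrC.
Qed.

Lemma s_neq0 : s != 0.
Proof.
rewrite /s; apply/eqP => /(congr1 (@complex.Re R)) /= /eqP.
rewrite invr_eq0 sqrtr_eq0 Order.TotalTheory.leNgt => /negP; apply.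
rewrite ltr0n expn_gt0; apply/orP; left; apply/card_gt0P; by exists 0.
Qed.
End Main.

Theorem proposition3p6 (R : realType) (p r : nat) (F : finFieldType)
    (n k m : nat) (C : {vspace 'rV[F]_n}) (K : finFieldType)
    (kappa : K -> 'rV[F]_n -> 'F_p) :
  prime p -> #|F| = (p ^ r)%N ->
  \dim C = k -> (1 <= k)%N -> (k < n)%N -> (2 <= m)%N ->
  #|K| = ((p ^ r) ^ k)%N ->
  Fp_iso_to_dual C kappa ->
  (<<[seq @Phi R p F n m C K kappa Lam | Lam <- enum (diagD K m)]>>%VS
     : {vspace ket_space R F n m})
  = <<[seq @sumket R F n m C c | c <- code_elems C]>>%VS.
Proof.
move=> pp HF hk _ _ _ HKc Hiso.
have HK : #|K| = (#|F| ^ \dim C)%N by rewrite HKc HF hk.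
apply/eqP; rewrite eqEsubv; apply/andP; split; apply/span_subvP => x /mapP [y Hy ->].
  rewrite mem_enum in Hy; case/imsetP: Hy => l _ ->.
  have := PhiA R p F n m C K kappa pp Hiso l; rewrite /LL => ->.
  apply: memvZ; apply: memv_suml => c hc; apply: memvZ; apply: memv_span.
  by apply/mapP; exists c; rewrite // /code_elems mem_enum inE.
rewrite /code_elems mem_enum inE in Hy.
have E := PhiB R p F n m C K kappa pp Hiso HK y Hy.
have nz : (#|K|%:R * (((Num.sqrt ((#|F| ^ \dim C)%:R : R))^-1) +i* 0)%C ^+ m) != 0.
  rewrite mulf_eq0 negb_or expf_eq0 negb_and s_neq0 orbT andbT.
  by rewrite pnatr_eq0 -lt0n; apply/card_gt0P; exists 0.
rewrite -[X in X \in _]scale1r -(mulVf nz) -scalerA -E.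
apply: memvZ; apply: memv_suml => l _; apply: memvZ; apply: memv_span.
apply/mapP; exists (LL m K l) => //.
by rewrite mem_enum; apply/imsetP; exists l.
Qed.
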